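(* Let $q$ be an indeterminate (with square root $q^{1/2}$) and put $X_n=\frac{[n][n+1]}{q^n}$ for $n\geq 0$. For integers $k,m$ define the polynomials \begin{align*} c_{k,m}(q)&=h_{2m-k}(\{1,q^2\}^{k-m+1})+q\,h_{2m-k-1}(\{1,q^2\}^{k-m+1}),\\ g_{k,m}(q)&=h_{2m-k}(\{1\}^{k-m+1},\{q\}^{k-m})+h_{2m-k}(\{1\}^{k-m},\{q\}^{k-m+1}),\\ d_{k,m}(q)&=g_{k,m}(q^2)+q\,g_{k-1,m-1}(q^2). \end{align*} Then for all integers $m,l\geq1$, with all sums over integers $k\ge 0$ (only finitely many terms are nonzero): \begin{align*} X_l^{m+1}-X_{l-1}^{m+1}&=\sum_k h_{m-2k}(\{1,q\}^{k+1})\,[2l]\,[l]^{2(m-k)}q^{-l(m-k+1)},\\ \frac{1-q^{l+\frac12}}{(1-q^{\frac12})q^{\frac l2}}X_l^m-\frac{1-q^{l-\frac12}}{(1-q^{\frac12})q^{\frac{l-1}{2}}}X_{l-1}^m&=\sum_k c_{m,m-k}(q^{\frac12})\,[2l]\,[l]^{2(m-k)-1}q^{-l(m-k+\frac12)},\\ X_l^m+X_{l-1}^m&=\sum_k g_{m,m-k}(q)\,[l]^{2(m-k)}q^{-l(m-k)},\\ \frac{1-q^{l+\frac12}}{(1-q^{\frac12})q^{\frac l2}}X_l^{m-1}+\frac{1-q^{l-\frac12}}{(1-q^{\frac12})q^{\frac{l-1}{2}}}X_{l-1}^{m-1}&=\sum_k d_{m,m-k}(q^{\frac12})\,[l]^{2(m-k)-1}q^{-l(m-k-\frac12)}.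 \end{align*}
   Context: For an integer $k\ge0$, $[k]=\frac{1-q^k}{1-q}$. For integers $r,s\geq0$, $h_n(\{1\}^r,\{x\}^s)$ is defined by $\sum_{n\geq0}h_n(\{1\}^r,\{x\}^s)z^n=\frac{1}{(1-z)^r(1-xz)^s}$ (so $h_n=0$ for $n<0$), with the convention $h_n(\{1\}^r,\{x\}^s)=0$ if $r<0$ or $s<0$. One writes $h_n(\{1,x\}^r)$ for $h_n(\{1\}^r,\{x\}^r)$. The notation $c_{m,m-k}(q^{1/2})$ etc. means the polynomial $c_{m,m-k}$ evaluated at $q^{1/2}$. *)

(* Defs.v *)
From HB Require Import structures.
From mathcomp Require Import all_boot all_order all_algebra.
From mathcomp Require Import fraction.
Set Implicit Arguments. Unset Strict Implicit. Unset Printing Implicit Defensive.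
Import Order.TTheory GRing.Theory Num.Theory.
Local Open Scope ring_scope.

(* Complete homogeneous symmetric function h_n evaluated at the (multi)list s
   of values: coefficient of z^n in prod_{x in s} 1/(1 - x z), computed as the
   Cauchy product of the geometric series sum_j x^j z^j. *)
Definition hlist (R : comPzRingType) (s : seq R) : nat -> R :=
  foldr (fun x (f : nat -> R) => fun n => \sum_(j < n.+1) x ^+ j * f (n - j)%N)
        (fun n => (n == 0%N)%:R) s.

(* h_n({1}^r,{x}^s), with the convention h_n = 0 if n < 0, r < 0 or s < 0. *)
Definition hh (R : comPzRingType) (n r s : int) (x : R) : R :=
  if (n < 0) || (r < 0) || (s < 0) then 0
  else hlist (nseq `|r|%N 1 ++ nseq `|s|%N x) `|n|%N.

Definition qbr (F : fieldType) (q : F) (k : nat) : F := (1 - q ^+ k) / (1 - q).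

Definition Xn (F : fieldType) (q : F) (n : nat) : F :=
  qbr q n * qbr q n.+1 / q ^+ n.

Definition cpol (R : comPzRingType) (k m : int) (y : R) : R :=
  hh (2 * m - k) (k - m + 1) (k - m + 1) (y ^+ 2)
  + y * hh (2 * m - k - 1) (k - m + 1) (k - m + 1) (y ^+ 2).

Definition gpol (R : comPzRingType) (k m : int) (y : R) : R :=
  hh (2 * m - k) (k - m + 1) (k - m) y + hh (2 * m - k) (k - m) (k - m + 1) y.

Definition dpol (R : comPzRingType) (k m : int) (y : R) : R :=
  gpol k m (y ^+ 2) + y * gpol (k - 1) (m - 1) (y ^+ 2).

(* The field of rational functions Q(t); t plays the role of q^{1/2}. *)
Definition RatFun := {fraction {poly rat}}.
Definition tind : RatFun := @FracField.tofrac {poly rat} 'X.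

(* Main.v *)
Require Import Defs.
From HB Require Import structures.
From mathcomp Require Import all_boot all_order all_algebra.
From mathcomp Require Import fraction zify ring.
Import Order.TTheory GRing.Theory Num.Theory.
Local Open Scope ring_scope.
Set Implicit Arguments. Unset Strict Implicit.

Section H.
Variable R : comPzRingType.
Implicit Types (x c : R) (s : seq R).

Lemma hlist_cons c s n : hlist (c :: s) n = \sum_(j < n.+1) c ^+ j * hlist s (n - j)%N.
Proof. by []. Qed.

Lemma hlist0 s : hlist s 0 = 1.
Proof. elim: s => [|c s IH] //=; by rewrite big_ord1 expr0 mul1r IH. Qed.

Lemma hlist_nil n : hlist (R:=R) [::] n = (n == 0%N)%:R.
Proof. by []. Qed.

Lemma hlistS c s n : hlist (c :: s) n.+1 = hlist s n.+1 + c * hlist (c :: s) n.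
Proof.
rewrite !hlist_cons big_ord_recl expr0 mul1r subn0; congr (_ + _).
rewrite big_distrr; apply: eq_bigr => j _ /=.
by rewrite exprS mulrA subSS.
Qed.

Lemma hlist_ext c s s' : (forall n, hlist s n = hlist s' n) ->
  forall n, hlist (c :: s) n = hlist (c :: s') n.
Proof. move=> H n; rewrite !hlist_cons; apply: eq_bigr => j _; by rewrite H. Qed.

Lemma hlist_swap x y s n : hlist (x :: y :: s) n = hlist (y :: x :: s) n.
Proof.
suff: hlist (x :: y :: s) n = hlist (y :: x :: s) n /\
      hlist (x :: y :: s) n.+1 = hlist (y :: x :: s) n.+1 by case.
elim: n => [|n [IH1 IH2]].
  rewrite !hlist0; split=> //.
  rewrite !hlistS !hlist0; ring.
split=> //.
have eA : hlist (y :: s) n.+1 = hlist (x :: y :: s) n.+1 - x * hlist (x :: y :: s) n.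
  by rewrite [hlist (x :: y :: s) n.+1]hlistS addrK.
have eB : hlist (x :: s) n.+1 = hlist (y :: x :: s) n.+1 - y * hlist (y :: x :: s) n.
  by rewrite [hlist (y :: x :: s) n.+1]hlistS addrK.
rewrite hlistS [hlist (y :: s) n.+2]hlistS [RHS]hlistS [hlist (x :: s) n.+2]hlistS.
rewrite eA eB IH1 IH2; ring.
Qed.

Lemma hlist_move r c x s n :
  hlist (nseq r c ++ x :: s) n = hlist (x :: nseq r c ++ s) n.
Proof.
elim: r n => [|r IH] n; first by [].
change (hlist (c :: (nseq r c ++ x :: s)) n = hlist (x :: c :: (nseq r c ++ s)) n).
by rewrite (hlist_ext c IH) hlist_swap.
Qed.

Lemma hlist1 c n : hlist [:: c] n = c ^+ n.
Proof.
elim: n => [|n IH]; first by rewrite hlist0.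
by rewrite hlistS IH hlist_nil add0r exprS.
Qed.

End H.
Section HH.
Variable R : comPzRingType.
Implicit Types (x : R).

Lemma hhN (n r s : int) x : n < 0 -> hh n r s x = 0.
Proof. by rewrite /hh => ->. Qed.

Lemma hhP (n r s : nat) x : hh n r s x = hlist (nseq r 1 ++ nseq s x) n.
Proof. by []. Qed.

Lemma hh_move (n r s : nat) x :
  hh n r.+1 s.+1 x = hlist (1 :: x :: (nseq r 1 ++ nseq s x)) n.
Proof.
rewrite hhP.
change (hlist (1 :: (nseq r 1 ++ x :: nseq s x)) n = hlist (1 :: x :: (nseq r 1 ++ nseq s x)) n).
by rewrite (hlist_ext 1 (hlist_move r 1 x (nseq s x))).
Qed.

Lemma hh_key (n : int) (r s : nat) x :
  hh n r.+1 s.+1 x = hh n r s x + (1 + x) * hh (n - 1) r.+1 s.+1 x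
                      - x * hh (n - 2) r.+1 s.+1 x.
Proof.
case: n => [n|n]; last first.
  rewrite !hhN //; try lia; ring.
case: n => [|[|n]].
- rewrite (hhN (n := 0 - 1)) // (hhN (n := 0 - 2)) // hh_move !hhP !hlist0; ring.
- rewrite (hhN (n := 1 - 2)) //.
  have -> : (Posz 1 - 1 = Posz 0) by [].
  rewrite !hh_move !hhP hlistS hlistS !hlist0; ring.
- have -> : (Posz n.+2 - 1 = Posz n.+1) by lia.
  have -> : (Posz n.+2 - 2 = Posz n) by lia.
  rewrite !hh_move !hhP.
  set M := nseq r 1 ++ nseq s x.
  have e : hlist (x :: M) n.+1 = hlist (1 :: x :: M) n.+1 - 1 * hlist (1 :: x :: M) n.
    by rewrite [hlist (1 :: x :: M) n.+1]hlistS addrK.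
  rewrite hlistS [hlist (x :: M) n.+2]hlistS e; ring.
Qed.

Lemma hh00 (n : nat) x : hh n 0 0 x = (n == 0%N)%:R.
Proof. by []. Qed.

Lemma hh10 (n : nat) x : hh n 1 0 x = 1.
Proof. by rewrite hhP hlist1 expr1n. Qed.

Lemma hh01 (n : nat) x : hh n 0 1 x = x ^+ n.
Proof. by rewrite hhP hlist1. Qed.

End HH.
Section Coef.
Variable R : comPzRingType.
Variable x : R.

Definition Ec (m : int) (k : nat) : R := hh (m - 2 * k%:Z) k.+1 k.+1 x.
Definition Gc (m : int) (k : nat) : R :=
  hh (m - 2 * k%:Z) k.+1 k x + hh (m - 2 * k%:Z) k k.+1 x.

Lemma hh00z (n : int) : n != 0 -> hh n 0 0 x = 0.
Proof.
case: n => [n|n] H; last by rewrite hhN.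
by rewrite hh00; case: n H.
Qed.

Lemma Ec_rec1 (m m1 m2 : int) k : m1 = m + 1 -> m2 = m + 2 ->
  Ec m2 k.+1 = (1 + x) * Ec m1 k.+1 - x * Ec m k.+1 + Ec m k.
Proof.
move=> -> ->; rewrite /Ec.
have -> : m + 2 - 2 * k.+1%:Z = m - 2 * k%:Z by lia.
have -> : m + 1 - 2 * k.+1%:Z = m - 2 * k%:Z - 1 by lia.
have -> : m - 2 * k.+1%:Z = m - 2 * k%:Z - 2 by lia.
rewrite (hh_key (m - 2 * k%:Z) k.+1 k.+1); ring.
Qed.

Lemma Ec_rec0 (m m1 m2 : int) : m1 = m + 1 -> m2 = m + 2 -> m2 != 0 ->
  Ec m2 0 = (1 + x) * Ec m1 0 - x * Ec m 0.
Proof.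
move=> -> -> H; rewrite /Ec.
have -> : m + 1 - 2 * 0%:Z = m + 2 - 2 * 0%:Z - 1 by lia.
have -> : m - 2 * 0%:Z = m + 2 - 2 * 0%:Z - 2 by lia.
rewrite (hh_key (m + 2 - 2 * 0%:Z) 0 0) hh00z; last by rewrite mulr0 subr0.
ring.
Qed.

Lemma Gc_rec1 (m m1 m2 : int) k : m1 = m + 1 -> m2 = m + 2 ->
  Gc m2 k.+1 = (1 + x) * Gc m1 k.+1 - x * Gc m k.+1 + Gc m k.
Proof.
move=> -> ->; rewrite /Gc.
have -> : m + 2 - 2 * k.+1%:Z = m - 2 * k%:Z by lia.
have -> : m + 1 - 2 * k.+1%:Z = m - 2 * k%:Z - 1 by lia.
have -> : m - 2 * k.+1%:Z = m - 2 * k%:Z - 2 by lia.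
rewrite (hh_key (m - 2 * k%:Z) k.+1 k) (hh_key (m - 2 * k%:Z) k k.+1); ring.
Qed.

Lemma Gc_rec0 (m m1 m2 : int) : m1 = m + 1 -> m2 = m + 2 -> 0 <= m ->
  Gc m2 0 = (1 + x) * Gc m1 0 - x * Gc m 0.
Proof.
move=> -> ->; case: m => [m|m] H; last by [].
rewrite /Gc.
have -> : Posz m + 2 - 2 * 0%:Z = Posz m.+2 by lia.
have -> : Posz m + 1 - 2 * 0%:Z = Posz m.+1 by lia.
have -> : Posz m - 2 * 0%:Z = Posz m by lia.
rewrite !hh10 !hh01 !exprS; ring.
Qed.

Lemma Ec_van (m : int) k : m < 2 * k%:Z -> Ec m k = 0.
Proof. move=> H; rewrite /Ec hhN //; lia. Qed.

Lemma Gc_van (m : int) k : m < 2 * k%:Z -> Gc m k = 0.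
Proof. move=> H; rewrite /Gc !hhN ?addr0 //; lia. Qed.

End Coef.
Section Gen.
Variable F : fieldType.
Variables (q V : F) (e : int) (c : nat -> nat -> F).
Hypothesis V0 : V != 0.
Hypothesis H0 : forall m, c m.+2 0 = (1 + q) * c m.+1 0 - q * c m 0.
Hypothesis H1 : forall m k, c m.+2 k.+1 = (1 + q) * c m.+1 k.+1 - q * c m k.+1 + c m k.
Hypothesis Hv : forall m k, (m < k)%N -> c m k = 0.

Definition wz (n k : nat) : F := V ^ (2 * (n%:Z - k%:Z) + e).
Definition Ssum (m : nat) : F := \sum_(k < m.+1) c m k * wz m k.

Lemma wzS n k : wz n.+1 k = wz n k * V ^+ 2.
Proof.
rewrite /wz.
have -> : 2 * (n.+1%:Z - k%:Z) + e = (2 * (n%:Z - k%:Z) + e) + 2 by lia.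
by rewrite expfzDr.
Qed.

Lemma wzSS n k : wz n.+1 k.+1 = wz n k.
Proof. rewrite /wz; congr (_ ^ _); lia. Qed.

Lemma Ssum_widen m : Ssum m = \sum_(k < m.+2) c m k * wz m k.
Proof. by rewrite /Ssum [in RHS]big_ord_recr /= (Hv (k := m.+1)) // mul0r addr0. Qed.

Lemma Ssum_widen2 m : Ssum m = \sum_(k < m.+3) c m k * wz m k.
Proof. by rewrite Ssum_widen [in RHS]big_ord_recr /= (Hv (k := m.+2)) // mul0r addr0. Qed.

Lemma Ssum_rec m : Ssum m.+2 = (1 + q) * V ^+ 2 * Ssum m.+1 - (q * V ^+ 4 - V ^+ 2) * Ssum m.
Proof.
rewrite {1}/Ssum big_ord_recl (Ssum_widen m.+1) (big_ord_recl m.+2).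
rewrite mulrBl {1}(Ssum_widen2 m) (big_ord_recl m.+2) (Ssum_widen m).
have e1 : forall k : 'I_m.+2, c m.+2 (lift ord0 k) * wz m.+2 (lift ord0 k) =
   (1 + q) * V ^+ 2 * (c m.+1 (lift ord0 k) * wz m.+1 (lift ord0 k))
   - q * V ^+ 4 * (c m (lift ord0 k) * wz m (lift ord0 k)) + V ^+ 2 * (c m k * wz m k).
  move=> k; rewrite !lift0 H1 -[wz m k](wzSS m k) !wzS; ring.
rewrite (eq_bigr _ (fun k _ => e1 k)) big_split sumrB /= -!mulr_sumr.
rewrite H0 !wzS; ring.
Qed.

Lemma main_gen (al be a b f : F) :
  al + be = (1 + q) * V ^+ 2 -> al * be = q * V ^+ 4 - V ^+ 2 ->
  a + b = f * Ssum 0 -> a * al + b * be = f * Ssum 1 ->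
  forall m, a * al ^+ m + b * be ^+ m = f * Ssum m.
Proof.
move=> Hs Hp B0 B1 m.
suff : a * al ^+ m + b * be ^+ m = f * Ssum m /\
       a * al ^+ m.+1 + b * be ^+ m.+1 = f * Ssum m.+1 by case.
elim: m => [|m [IH1 IH2]]; first by rewrite !expr0 !expr1 !mulr1.
split=> //.
have -> : f * Ssum m.+2 = (al + be) * (f * Ssum m.+1) - al * be * (f * Ssum m).
  by rewrite Ssum_rec -Hs -Hp; ring.
rewrite -IH1 -IH2 !exprS; ring.
Qed.

End Gen.
Section Fld.
Variable F : fieldType.
Variables t P : F.
Hypotheses (t0 : t != 0) (P0 : P != 0) (t1 : 1 - t != 0) (t2 : 1 + t != 0)
  (tP : 1 - t ^+ 2 * P ^+ 2 != 0).

Variables (al be A B V L2 : F).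
Hypotheses
 (eal : al = ((1 - t^+2*P^+2)/(1-t^+2)) * ((1 - t^+4*P^+2)/(1-t^+2)) / (t^+2*P^+2))
 (ebe : be = ((1 - P^+2)/(1-t^+2)) * ((1 - t^+2*P^+2)/(1-t^+2)) / P^+2)
 (eA : A = (1 - t^+3*P^+2)/((1-t)*(t*P)))
 (eB : B = (1 - t*P^+2)/((1-t)*P))
 (eV : V = ((1 - t^+2*P^+2)/(1-t^+2)) / (t*P))
 (eL2 : L2 = (1 - t^+4*P^+4)/(1-t^+2)).

Lemma t2' : 1 - t ^+ 2 != 0.
Proof. have -> : 1 - t^+2 = (1 - t) * (1 + t) by ring. by rewrite mulf_neq0. Qed.

Let h := t2'.
Ltac fs := have _ := (t0, P0, t1, t2, tP, eal, ebe, eA, eB, eV, eL2); rewrite ?eal ?ebe ?eA ?eB ?eV ?eL2; field; by rewrite ?t0 ?P0 ?t1 ?t2 ?exprMn ?tP ?h.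

Lemma F1 : al + be = (1 + t^+2) * V ^+ 2.
Proof. fs. Qed.
Lemma F2 : al * be = t^+2 * V ^+ 4 - V ^+ 2.
Proof. fs. Qed.
Lemma F3 : al - be = L2 / (t^+2 * P^+2).
Proof. fs. Qed.
Lemma F4 : A - B = (al - be) * V ^-1.
Proof. fs. Qed.
Lemma F5 : A * al - B * be = (al - be) * ((1 + t + t^+2) * V).
Proof. fs. Qed.
Lemma F6 : A + B = (1 + t) ^+ 2 * V.
Proof. fs. Qed.
Lemma F7 : A * al + B * be = (1 + t + t^+3 + t^+4) * V ^+ 3 + 2 * V.
Proof. fs. Qed.
End Fld.

Lemma convq (F : fieldType) (t a : F) (l : nat) (z : int) :
  a ^ z * t ^ (- (l%:Z * z)) = (a / t ^+ l) ^ z.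
Proof.
rewrite expfzMl exprz_inv.
change ((t ^+ l) ^ (- z)) with ((t ^ (Posz l)) ^ (- z)).
by rewrite exprz_exp mulrN.
Qed.

Lemma qz (F : fieldType) (t : F) (w : int) : (t ^+ 2) ^ w = t ^ (2 * w).
Proof. by rewrite -exprz_exp. Qed.

Lemma tnz (p : {poly rat}) : p`_0 != 0 -> (FracField.tofrac p : RatFun) != 0.
Proof.
move=> h; rewrite tofrac_eq0; apply: contra h => /eqP ->; by rewrite coef0.
Qed.
Section Conv.
Variable R : comPzRingType.

Lemma gpolE (x : R) (m k : nat) : gpol m%:Z (m%:Z - k%:Z) x = Gc x m k.
Proof. rewrite /gpol /Gc; congr (hh _ _ _ _ + hh _ _ _ _); lia. Qed.

Lemma cpolE (y : R) (m k : nat) :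
  cpol m%:Z (m%:Z - k%:Z) y = Ec (y ^+ 2) m k + y * Ec (y ^+ 2) (m%:Z - 1) k.
Proof. rewrite /cpol /Ec; congr (hh _ _ _ _ + _ * hh _ _ _ _); lia. Qed.

Lemma dpolE (y : R) (m k : nat) :
  dpol m%:Z (m%:Z - k%:Z) y = Gc (y ^+ 2) m k + y * Gc (y ^+ 2) (m%:Z - 1) k.
Proof. rewrite /dpol /gpol /Gc; congr (hh _ _ _ _ + hh _ _ _ _ + _ * (hh _ _ _ _ + hh _ _ _ _)); lia. Qed.

Lemma hhE (n : int) (n' r s : nat) (x : R) : n = n' -> hh n r s x = hh n' r s x.
Proof. by move->. Qed.

Variable x : R.
Lemma E00 : Ec x 0 0 = 1.
Proof. by rewrite /Ec (@hhE _ 0) // hh_move hlist0. Qed.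
Lemma E10 : Ec x 1 0 = 1 + x.
Proof. rewrite /Ec (@hhE _ 1) // hh_move !hlistS !hlist0 (hlist_nil R 1) /=; ring. Qed.
Lemma G00 : Gc x 0 0 = 2.
Proof. by rewrite /Gc (@hhE _ 0) // hh10 hh01. Qed.
Lemma G10 : Gc x 1 0 = 1 + x.
Proof. by rewrite /Gc (@hhE _ 1) // hh10 hh01. Qed.
Lemma G20 : Gc x 2 0 = 1 + x ^+ 2.
Proof. by rewrite /Gc (@hhE _ 2) // hh10 hh01. Qed.
Lemma G21 : Gc x 2 1 = 2.
Proof.
rewrite /Gc (@hhE _ 0) //.
have -> : hh 0 2 1 x = 1 by rewrite hhP hlist0.
by rewrite hhP hlist0.
Qed.
End Conv.

Lemma Ssum0 (F : fieldType) (V : F) e c : Ssum V e c 0 = c 0%N 0%N * V ^ e.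
Proof. rewrite /Ssum big_ord1 /wz /=; congr (_ * (_ ^ _)); by rewrite subrr mulr0 add0r. Qed.

Lemma Ssum1 (F : fieldType) (V : F) e c :
  Ssum V e c 1 = c 1%N 0%N * V ^ (2 + e) + c 1%N 1%N * V ^ e.
Proof. rewrite /Ssum big_ord_recr big_ord1 /wz /=; congr (_ * (_ ^ _) + _ * (_ ^ _)); by rewrite subrr mulr0 add0r. Qed.

Unset Implicit Arguments.
Set Strict Implicit.

Theorem lemma2p2 (m l : nat) : (1 <= m)%N -> (1 <= l)%N ->
  let t := tind in
  let q := t ^+ 2 in
  let X := Xn q in
  (* (1 - q^{l+1/2}) / ((1 - q^{1/2}) q^{l/2}) and its l-1 analogue *)
  let A := (1 - t ^+ (2 * l + 1)) / ((1 - t) * t ^+ l) in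
  let B := (1 - t ^+ (2 * l - 1)) / ((1 - t) * t ^+ (l - 1)) in
  [/\ X l ^+ m.+1 - X l.-1 ^+ m.+1 =
        \sum_(0 <= k < m.+1)
          hh (m%:Z - 2 * k%:Z) (k%:Z + 1) (k%:Z + 1) q * qbr q (2 * l)
          * qbr q l ^ (2 * (m%:Z - k%:Z)) * q ^ (- (l%:Z * (m%:Z - k%:Z + 1))),
      A * X l ^+ m - B * X l.-1 ^+ m =
        \sum_(0 <= k < m.+1)
          cpol m%:Z (m%:Z - k%:Z) t * qbr q (2 * l)
          * qbr q l ^ (2 * (m%:Z - k%:Z) - 1)
          * t ^ (- (l%:Z * (2 * (m%:Z - k%:Z) + 1))),
      X l ^+ m + X l.-1 ^+ m =
        \sum_(0 <= k < m.+1)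
          gpol m%:Z (m%:Z - k%:Z) q
          * qbr q l ^ (2 * (m%:Z - k%:Z)) * q ^ (- (l%:Z * (m%:Z - k%:Z)))
    & A * X l ^+ m.-1 + B * X l.-1 ^+ m.-1 =
        \sum_(0 <= k < m.+1)
          dpol m%:Z (m%:Z - k%:Z) t
          * qbr q l ^ (2 * (m%:Z - k%:Z) - 1)
          * t ^ (- (l%:Z * (2 * (m%:Z - k%:Z) - 1)))].
Proof.
move=> Hm Hl; case: l Hl => [//|l'] _ t q X A B.
have t0 : t != 0 by rewrite /t /tind tofrac_eq0 polyX_eq0.
have t1 : 1 - t != 0.
  have : (FracField.tofrac (1 - 'X : {poly rat}) : RatFun) != 0.
    by apply: tnz; rewrite coefB coef1 coefX subr0 oner_eq0.
  by rewrite tofracB tofrac1.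
have t2 : 1 + t != 0.
  have : (FracField.tofrac (1 + 'X : {poly rat}) : RatFun) != 0.
    by apply: tnz; rewrite coefD coef1 coefX addr0 oner_eq0.
  by rewrite tofracD tofrac1.
set P := t ^+ l'.
have P0 : P != 0 := expf_neq0 _ t0.
have e_t2l : t ^+ (2 * l'.+1) = t ^+ 2 * P ^+ 2.
  by rewrite /P -!exprM -exprD; congr (_ ^+ _); lia.
have tP : 1 - t ^+ 2 * P ^+ 2 != 0.
  rewrite -e_t2l.
  have : (FracField.tofrac (1 - 'X^(2 * l'.+1) : {poly rat}) : RatFun) != 0.
    by apply: tnz; rewrite coefB coef1 coefXn subr0 oner_eq0.
  by rewrite tofracB tofrac1 tofracXn.
have e_ql : q ^+ l'.+1 = t^+2 * P^+2.
  by rewrite /q /P -!exprM -exprD; congr (_ ^+ _); lia.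
have e_ql1 : q ^+ l'.+2 = t^+4 * P^+2.
  by rewrite /q /P -!exprM -exprD; congr (_ ^+ _); lia.
have e_ql0 : q ^+ l' = P^+2.
  by rewrite /q /P -!exprM; congr (_ ^+ _); lia.
have e_q2l : q ^+ (2 * l'.+1) = t^+4 * P^+4.
  by rewrite /q /P -!exprM -exprD; congr (_ ^+ _); lia.
have e_A1 : t ^+ (2 * l'.+1 + 1) = t^+3 * P^+2.
  by rewrite /P -!exprM -exprD; congr (_ ^+ _); lia.
have e_tl : t ^+ l'.+1 = t * P by rewrite exprS.
have e_B1 : t ^+ (2 * l'.+1 - 1) = t * P^+2.
  by rewrite /P -!exprM -exprS; congr (_ ^+ _); lia.
have e_B2 : t ^+ (l'.+1 - 1) = P by rewrite subn1.
have -> : l'.+1.-1 = l' by [].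
set al := X l'.+1. set be := X l'.
set V := qbr q l'.+1 / t ^+ l'.+1.
set L2 := qbr q (2 * l'.+1).
have eal : al = ((1 - t^+2*P^+2)/(1-t^+2)) * ((1 - t^+4*P^+2)/(1-t^+2)) / (t^+2*P^+2).
  by rewrite /al /X /Xn /qbr e_ql e_ql1.
have ebe : be = ((1 - P^+2)/(1-t^+2)) * ((1 - t^+2*P^+2)/(1-t^+2)) / P^+2.
  by rewrite /be /X /Xn /qbr e_ql e_ql0.
have eA : A = (1 - t^+3*P^+2)/((1-t)*(t*P)) by rewrite /A e_A1 e_tl.
have eB : B = (1 - t*P^+2)/((1-t)*P) by rewrite /B e_B1 e_B2.
have eV : V = ((1 - t^+2*P^+2)/(1-t^+2)) / (t*P) by rewrite /V /qbr e_ql e_tl.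
have eL2 : L2 = (1 - t^+4*P^+4)/(1-t^+2) by rewrite /L2 /qbr e_q2l.
have f1 := F1 t0 P0 t1 t2 tP eal ebe eA eB eV eL2.
have f2 := F2 t0 P0 t1 t2 tP eal ebe eA eB eV eL2.
have f3 := F3 t0 P0 t1 t2 tP eal ebe eA eB eV eL2.
have f4 := F4 t0 P0 t1 t2 tP eal ebe eA eB eV eL2.
have f5 := F5 t0 P0 t1 t2 tP eal ebe eA eB eV eL2.
have f6 := F6 t0 P0 t1 t2 tP eal ebe eA eB eV eL2.
have f7 := F7 t0 P0 t1 t2 tP eal ebe eA eB eV eL2.
have V0 : V != 0.
  have h2 : 1 - t^+2 != 0.
    have -> : 1 - t^+2 = (1 - t) * (1 + t) by ring.
    exact: mulf_neq0 t1 t2.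
  rewrite eV; apply: mulf_neq0; last by rewrite invr_eq0; exact: mulf_neq0 t0 P0.
  apply: mulf_neq0; first exact: tP.
  by rewrite invr_eq0.
have eqz : forall z : int, q ^ (- (l'.+1%:Z * z)) = t ^ (- (l'.+1%:Z * (2 * z - 2))) * (t ^+ 2 * P ^+ 2)^-1.
  move=> z; rewrite /q qz -e_t2l.
  rewrite -[t ^+ (2 * l'.+1)]/(t ^ (Posz (2 * l'.+1))) invr_expz -(expfzDr _ _ t0).
  congr (_ ^ _); rewrite PoszM; ring.
have eqt : forall z : int, t ^ (- (l'.+1%:Z * z)) = t ^ (- (l'.+1%:Z * (z - 2))) * (t ^+ 2 * P ^+ 2)^-1.
  move=> z; rewrite -e_t2l.
  rewrite -[t ^+ (2 * l'.+1)]/(t ^ (Posz (2 * l'.+1))) invr_expz -(expfzDr _ _ t0).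
  congr (_ ^ _); rewrite PoszM; ring.
split.
- have H0 : forall n, Ec q n.+2 0 = (1 + q) * Ec q n.+1 0 - q * Ec q n 0.
    move=> n; apply: Ec_rec0; lia.
  have H1 : forall n k, Ec q n.+2 k.+1 = (1 + q) * Ec q n.+1 k.+1 - q * Ec q n k.+1 + Ec q n k.
    move=> n k; apply: Ec_rec1; lia.
  have Hv : forall n k, (n < k)%N -> Ec q n k = 0.
    move=> n k h; apply: Ec_van; lia.
  have B0 : al + - be = (al - be) * Ssum V 0 (fun n k => Ec q n k) 0.
    by rewrite Ssum0 E00 expr0z !mulr1.
  have B1 : al * al + - be * be = (al - be) * Ssum V 0 (fun n k => Ec q n k) 1.
    rewrite Ssum1 E10 (@Ec_van _ q 1 1); last by lia.
    rewrite addr0 expr0z.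
    change (V ^ 2) with (V ^+ 2).
    rewrite /q -f1; ring.
  have R := main_gen V0 H0 H1 Hv f1 f2 B0 B1 m.
  have -> : al ^+ m.+1 - be ^+ m.+1 = al * al ^+ m + - be * be ^+ m by rewrite !exprS; ring.
  rewrite R /Ssum mulr_sumr big_mkord; apply: eq_bigr => k _.
  cbv beta.
  have eh : hh (m%:Z - 2 * k%:Z) (k%:Z + 1) (k%:Z + 1) q = Ec q m k.
    by rewrite /Ec; congr (hh _ _ _ _); lia.
  rewrite eh.
  rewrite eqz.
  have -> : 2 * (m%:Z - k%:Z + 1) - 2 = 2 * (m%:Z - k%:Z) by ring.
  rewrite f3 /wz addr0 /V -convq.
  ring.
- pose c := fun n k : nat => Ec q n k + t * Ec q (n%:Z - 1) k.
  have H0 : forall n, c n.+2 0%N = (1 + q) * c n.+1 0%N - q * c n 0%N.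
    move=> n; rewrite /c (@Ec_rec0 _ q n n.+1 n.+2); try lia.
    rewrite (@Ec_rec0 _ q (n%:Z - 1) (n.+1%:Z - 1) (n.+2%:Z - 1)); try lia.
    ring.
  have H1 : forall n k, c n.+2 k.+1 = (1 + q) * c n.+1 k.+1 - q * c n k.+1 + c n k.
    move=> n k; rewrite /c (@Ec_rec1 _ q n n.+1 n.+2); try lia.
    rewrite (@Ec_rec1 _ q (n%:Z - 1) (n.+1%:Z - 1) (n.+2%:Z - 1)); try lia.
    ring.
  have Hv : forall n k, (n < k)%N -> c n k = 0.
    move=> n k h; rewrite /c !Ec_van; try lia. ring.
  have B0 : A + - B = (al - be) * Ssum V (-1) c 0.
    rewrite Ssum0 /c E00 (@Ec_van _ q (0 - 1) 0); last by lia.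
    rewrite exprN1 f4; ring.
  have B1 : A * al + - B * be = (al - be) * Ssum V (-1) c 1.
    rewrite Ssum1 /c E10 (@Ec_van _ q 1 1); last by lia.
    rewrite (@Ec_van _ q (1 - 1) 1); last by lia.
    have -> : (1%:Z - 1) = 0 by [].
    rewrite E00 exprN1.
    have -> : (2 + -1 : int) = 1 by [].
    rewrite expr1z.
    have -> : A * al + - B * be = A * al - B * be by ring.
    rewrite f5 /q; ring.
  have R := main_gen V0 H0 H1 Hv f1 f2 B0 B1 m.
  have -> : A * al ^+ m - B * be ^+ m = A * al ^+ m + - B * be ^+ m by ring.
  rewrite R /Ssum mulr_sumr big_mkord; apply: eq_bigr => k _.
  rewrite /c; cbv beta.
  rewrite cpolE -/q eqt.
  have -> : 2 * (m%:Z - k%:Z) + 1 - 2 = 2 * (m%:Z - k%:Z) - 1 by ring.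
  rewrite f3 /wz /V -convq.
  ring.
- have H0 : forall n, Gc q n.+2 0 = (1 + q) * Gc q n.+1 0 - q * Gc q n 0.
    move=> n; apply: Gc_rec0; lia.
  have H1 : forall n k, Gc q n.+2 k.+1 = (1 + q) * Gc q n.+1 k.+1 - q * Gc q n k.+1 + Gc q n k.
    move=> n k; apply: Gc_rec1; lia.
  have Hv : forall n k, (n < k)%N -> Gc q n k = 0.
    move=> n k h; apply: Gc_van; lia.
  have B0 : 1 + 1 = 1 * Ssum V 0 (fun n k => Gc q n k) 0.
    rewrite Ssum0 G00 expr0z; ring.
  have B1 : 1 * al + 1 * be = 1 * Ssum V 0 (fun n k => Gc q n k) 1.
    rewrite Ssum1 G10 (@Gc_van _ q 1 1); last by lia.
    rewrite addr0 expr0z.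
    change (V ^ 2) with (V ^+ 2).
    rewrite /q -f1; ring.
  have R := main_gen V0 H0 H1 Hv f1 f2 B0 B1 m.
  have -> : al ^+ m + be ^+ m = 1 * al ^+ m + 1 * be ^+ m by ring.
  rewrite R /Ssum mulr_sumr big_mkord; apply: eq_bigr => k _.
  cbv beta.
  rewrite gpolE /q qz -/q.
  have -> : 2 * - (l'.+1%:Z * (m%:Z - k%:Z)) = - (l'.+1%:Z * (2 * (m%:Z - k%:Z))) by ring.
  rewrite /wz addr0 /V -convq.
  ring.
- case: m Hm => [|m'] Hm; first by [].
  pose c := fun n k : nat => Gc q n.+1 k + t * Gc q n k.
  have H0 : forall n, c n.+2 0%N = (1 + q) * c n.+1 0%N - q * c n 0%N.
    move=> n; rewrite /c (@Gc_rec0 _ q n.+1 n.+2 n.+3); try lia.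
    rewrite (@Gc_rec0 _ q n n.+1 n.+2); try lia.
    ring.
  have H1 : forall n k, c n.+2 k.+1 = (1 + q) * c n.+1 k.+1 - q * c n k.+1 + c n k.
    move=> n k; rewrite /c (@Gc_rec1 _ q n.+1 n.+2 n.+3); try lia.
    rewrite (@Gc_rec1 _ q n n.+1 n.+2); try lia.
    ring.
  have Hv : forall n k, (n < k)%N -> c n k = 0.
    move=> n k h; rewrite /c !Gc_van; try lia. ring.
  have B0 : A + B = 1 * Ssum V 1 c 0.
    rewrite Ssum0 /c G10 G00 expr1z f6 /q; ring.
  have B1 : A * al + B * be = 1 * Ssum V 1 c 1.
    rewrite Ssum1 /c G20 G10 G21 (@Gc_van _ q 1 1); last by lia.
    have -> : (2 + 1 : int) = 3 by [].
    change (V ^ 3) with (V ^+ 3).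
    rewrite expr1z f7 /q; ring.
  have R := main_gen V0 H0 H1 Hv f1 f2 B0 B1 m'.
  have -> : m'.+1.-1 = m' by [].
  rewrite R /Ssum mulr_sumr big_mkord [RHS]big_ord_recr /=.
  rewrite dpolE -/q (@Gc_van _ q m'.+1 m'.+1); last by lia.
  rewrite (@Gc_van _ q (m'.+1%:Z - 1) m'.+1); last by lia.
  rewrite mulr0 addr0 mul0r mul0r addr0.
  apply: eq_bigr => k _.
  rewrite /c; cbv beta.
  rewrite dpolE -/q.
  have -> : (m'.+1%:Z - 1) = m'%:Z by lia.
  rewrite -[RHS]mulrA convq /V /wz.
  have -> : 2 * (m'.+1%:Z - k%:Z) - 1 = 2 * (m'%:Z - k%:Z) + 1 by lia.
  ring.
Qed.
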